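(* Let $\mathfrak{g}$ be a real Lie algebra endowed with a complex structure $J$ such that $J\xi\cap[\mathfrak{g},\mathfrak{g}]\neq\{0\}$, where $\xi$ denotes the center of $\mathfrak{g}$. Then $(\mathfrak{g},J)$ does not admit any Hermitian-symplectic structure.
   Context: A complex structure on a real Lie algebra $\mathfrak{g}$ is a linear map $J:\mathfrak{g}\to\mathfrak{g}$ with $J^2=-\mathrm{Id}$ and $[X,Y]-[JX,JY]+J[JX,Y]+J[X,JY]=0$ for all $X,Y$. A Hermitian-symplectic structure on $(\mathfrak{g},J)$ is a real $2$-form $\Omega\in\Lambda^2\mathfrak{g}^*$ that is closed with respect to the Chevalley–Eilenberg differential (i.e. $\Omega([X,Y],Z)+\Omega([Y,Z],X)+\Omega([Z,X],Y)=0$ for all $X,Y,Z$) and satisfies $\Omega(X,JX)>0$ for all non-zero $X\in\mathfrak{g}$. *)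

(* Defs.v *)
From HB Require Import structures.
From mathcomp Require Import all_boot all_order all_algebra.
From mathcomp Require Import reals.
Set Implicit Arguments. Unset Strict Implicit. Unset Printing Implicit Defensive.
Import Order.TTheory GRing.Theory Num.Theory.
Local Open Scope ring_scope.

Section LieDefs.
Variables (R : realType) (V : vectType R).

Definition lie_bracket (br : V -> V -> V) : Prop :=
  [/\ (forall (a : R) x y z, br (a *: x + y) z = a *: br x z + br y z),
      (forall (a : R) x y z, br x (a *: y + z) = a *: br x y + br x z),
      (forall x, br x x = 0) &
      (forall x y z, br x (br y z) + br y (br z x) + br z (br x y) = 0)].

Definition lie_center (br : V -> V -> V) : V -> Prop :=
  fun x => forall y, br x y = 0.

Definition derived_algebra (br : V -> V -> V) : V -> Prop :=
  fun z => exists (n : nat) (c : 'I_n -> R) (a b : 'I_n -> V),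
    z = \sum_(i < n) c i *: br (a i) (b i).

(* complex structure: linear J with J^2 = -Id and vanishing Nijenhuis tensor *)
Definition complex_structure (br : V -> V -> V) (J : V -> V) : Prop :=
  [/\ (forall (a : R) x y, J (a *: x + y) = a *: J x + J y),
      (forall x, J (J x) = - x) &
      (forall x y, br x y - br (J x) (J y) + J (br (J x) y) + J (br x (J y)) = 0)].

(* Hermitian-symplectic structure: a real 2-form (bilinear, alternating),
   closed for the Chevalley-Eilenberg differential, with Omega(X,JX) > 0
   for all X <> 0. *)
Definition hermitian_symplectic (br : V -> V -> V) (J : V -> V)
    (Om : V -> V -> R) : Prop :=
  [/\ (forall (a : R) x y z, Om (a *: x + y) z = a * Om x z + Om y z),
      (forall (a : R) x y z, Om x (a *: y + z) = a * Om x y + Om x z),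
      (forall x, Om x x = 0),
      (forall x y z, Om (br x y) z + Om (br y z) x + Om (br z x) y = 0) &
      (forall x, x != 0 -> 0 < Om x (J x))].

End LieDefs.

(* Main.v *)
Require Import Defs.
From HB Require Import structures.
From mathcomp Require Import all_boot all_order all_algebra.
From mathcomp Require Import reals.
Import Order.TTheory GRing.Theory Num.Theory.
Local Open Scope ring_scope.

Theorem lemma3p2 (R : realType) (V : vectType R) (br : V -> V -> V) (J : V -> V) :
  lie_bracket br ->
  complex_structure br J ->
  (exists z : V, [/\ z != 0,
                     (exists x, lie_center br x /\ z = J x) &
                     derived_algebra br z]) ->
  ~ (exists Om : V -> V -> R, hermitian_symplectic br J Om).
Proof.
move=> [bl1 bl2 balt _] [Jl _ _] [z [z0 [x [xc zx]] [n [c [a [b zE]]]]]].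
subst z. move=> [Om [Ol1 Ol2 Oalt Ocl Opos]].
have Oadd : forall u v w, Om (u + v) w = Om u w + Om v w.
  by move=> u v w; rewrite -[u in LHS]scale1r Ol1 mul1r.
have Oadd2 : forall u v w, Om w (u + v) = Om w u + Om w v.
  by move=> u v w; rewrite -[u in LHS]scale1r Ol2 mul1r.
have Oanti : forall u v, Om u v = - Om v u.
  move=> u v; have := Oalt (u + v).
  rewrite Oadd !Oadd2 !Oalt add0r addr0 => /eqP; rewrite addr_eq0 => /eqP //.
have badd : forall u v w, br (u + v) w = br u w + br v w.
  by move=> u v w; rewrite -[u in LHS]scale1r bl1 scale1r.
have badd2 : forall u v w, br w (u + v) = br w u + br w v.
  by move=> u v w; rewrite -[u in LHS]scale1r bl2 scale1r.
have banti : forall u v, br u v = - br v u.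
  move=> u v; have := balt (u + v).
  rewrite badd !badd2 !balt add0r addr0 => /eqP; rewrite addr_eq0 => /eqP //.
have bx : forall u, br u x = 0 by move=> u; rewrite banti xc oppr0.
have O0 : forall w, Om 0 w = 0.
  by move=> w; apply/(addrI (Om 0 w)); rewrite -Oadd !addr0.
have Osc : forall k u w, Om (k *: u) w = k * Om u w.
  by move=> k u w; rewrite -[k *: u]addr0 Ol1 O0 addr0.
have Obr : forall u v, Om (br u v) x = 0.
  move=> u v; have := Ocl u v x; rewrite bx xc !O0 !addr0 //.
have Oz : Om (J x) x = 0.
  rewrite zE; elim: n c a b {zE} => [|n IH] c a b; first by rewrite big_ord0 O0.
  by rewrite big_ord_recr /= Oadd Osc Obr mulr0 addr0 IH.
have x0 : x != 0.
  apply/eqP => ex; move/eqP: z0; apply; rewrite ex.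
  have := Jl 1 0 0; rewrite !scale1r addr0 => h; by apply: (addrI (J 0)); rewrite addr0 -h.
have := Opos x x0; by rewrite Oanti Oz oppr0 ltxx.
Qed.
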